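(* Let $\gamma_a,\gamma_s>0$, $\lambda\ge 0$, $q>0$, $\sigma_B>0$, $\varepsilon_a\in(0,2)$, let $\beta_a,\beta_s:\mathbb R\to\mathbb R$ be globally Lipschitz continuous with $\beta_a\ge0$, $\beta_s>0$, and let $T_a^{(0)}\ge 0$, $T_s^{(0)}\ge 0$. Then the solution of \[ \begin{cases} \gamma_a T_a'=-\lambda(T_a-T_s)+\varepsilon_a\sigma_B|T_s|^3T_s-2\varepsilon_a\sigma_B|T_a|^3T_a+q\beta_a(T_a),\\ \gamma_s T_s'=-\lambda(T_s-T_a)-\sigma_B|T_s|^3T_s+\varepsilon_a\sigma_B|T_a|^3T_a+q\beta_s(T_s),\\ T_a(0)=T_a^{(0)},\quad T_s(0)=T_s^{(0)} \end{cases} \] converges, as $t\to+\infty$, to an equilibrium point of this system (a zero of its right-hand side). *)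

(* Defs.v *)
From Stdlib Require Import Reals.
From Coquelicot Require Import Coquelicot.
Open Scope R_scope.

Definition globally_lipschitz (f : R -> R) : Prop :=
  exists L : R, 0 <= L /\ forall x y : R, Rabs (f x - f y) <= L * Rabs (x - y).

Definition rhs_a (lam q sigB epsa : R) (beta_a : R -> R) (Ta Ts : R) : R :=
  - lam * (Ta - Ts) + epsa * sigB * (Rabs Ts ^ 3 * Ts)
  - 2 * epsa * sigB * (Rabs Ta ^ 3 * Ta) + q * beta_a Ta.

Definition rhs_s (lam q sigB epsa : R) (beta_s : R -> R) (Ta Ts : R) : R :=
  - lam * (Ts - Ta) - sigB * (Rabs Ts ^ 3 * Ts)
  + epsa * sigB * (Rabs Ta ^ 3 * Ta) + q * beta_s Ts.

Definition is_solution (ga gs lam q sigB epsa : R) (beta_a beta_s : R -> R)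
    (Ta0 Ts0 : R) (Ta Ts : R -> R) : Prop :=
  Ta 0 = Ta0 /\ Ts 0 = Ts0 /\
  filterlim Ta (at_right 0) (locally Ta0) /\
  filterlim Ts (at_right 0) (locally Ts0) /\
  (forall t : R, 0 < t ->
     is_derive Ta t (rhs_a lam q sigB epsa beta_a (Ta t) (Ts t) / ga) /\
     is_derive Ts t (rhs_s lam q sigB epsa beta_s (Ta t) (Ts t) / gs)).

Definition is_equilibrium (lam q sigB epsa : R) (beta_a beta_s : R -> R)
    (a s : R) : Prop :=
  rhs_a lam q sigB epsa beta_a a s = 0 /\ rhs_s lam q sigB epsa beta_s a s = 0.

(* Main.v *)
Require Import Defs.
From Stdlib Require Import Reals.
From Coquelicot Require Import Coquelicot.
From Stdlib Require Import Lra Psatz Classical Ranalysis5.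
Open Scope R_scope.

Lemma derive_cont (f : R -> R) x l : is_derive f x l -> continuity_pt f x.
Proof.
  intros H. apply continuity_pt_filterlim.
  apply (ex_derive_continuous f x). exists l. exact H.
Qed.

Lemma mvt_le (f df : R -> R) x y : x <= y -> (forall t, x <= t <= y -> is_derive f t (df t)) ->
  (forall t, x <= t <= y -> 0 <= df t) -> f x <= f y.
Proof.
  intros Hxy Hd Hp.
  destruct (MVT_gen f x y df) as [c [Hc Heq]].
  - intros t Ht. apply Hd. unfold Rmin, Rmax in Ht. destruct (Rle_dec x y); lra.
  - intros t Ht. apply derive_cont with (df t). apply Hd.
    unfold Rmin, Rmax in Ht. destruct (Rle_dec x y); lra.
  - assert (x <= c <= y) by (unfold Rmin, Rmax in Hc; destruct (Rle_dec x y); lra).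
    specialize (Hp c H). nra.
Qed.

Lemma gronwall (E dE : R -> R) c t0 t1 : t0 <= t1 ->
  (forall t, t0 <= t <= t1 -> is_derive E t (dE t)) ->
  (forall t, t0 <= t <= t1 -> dE t <= c * E t) ->
  E t1 <= E t0 * exp (c * (t1 - t0)).
Proof.
  intros H01 Hd Hle.
  assert (Hm : (fun t => - (E t * exp (- c * t))) t0 <= (fun t => - (E t * exp (- c * t))) t1).
  { apply (mvt_le (fun t => - (E t * exp (- c * t))) (fun t => - (dE t * exp (- c * t) + E t * (-c * exp (- c * t))))).
    - exact H01.
    - intros t Ht. apply (is_derive_opp (fun t => E t * exp (- c * t)) t (dE t * exp (- c * t) + E t * (- c * exp (- c * t)))).
      apply (is_derive_mult E (fun t => exp (- c * t))).
      + apply Hd; exact Ht.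
      + apply (is_derive_comp exp (fun t => -c * t)).
        * apply is_derive_exp.
        * evar_last. apply is_derive_scal. apply is_derive_id.
          apply Rmult_1_r.
      + intros; apply Rmult_comm.
    - intros t Ht. specialize (Hle t Ht). pose proof (exp_pos (-c*t)). nra. }
  simpl in Hm.
  assert (E t1 * exp (- c * t1) <= E t0 * exp (- c * t0)) by lra.
  replace (c * (t1 - t0)) with (c * t1 + (- c * t0)) by ring.
  rewrite exp_plus.
  pose proof (exp_pos (c*t1)).
  replace (E t1) with (E t1 * exp (- c * t1) * exp (c * t1)).
  2:{ rewrite Rmult_assoc, <- exp_plus. replace (- c * t1 + c * t1) with 0 by ring. rewrite exp_0; ring. }
  nra.
Qed.

Lemma is_derive_sqmin x : is_derive (fun y => Rmin y 0 ^ 2) x (2 * Rmin x 0).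
Proof.
  destruct (Rlt_or_le x 0) as [Hx|Hx]; [|destruct (Rle_lt_or_eq_dec 0 x Hx) as [Hx'|Hx']].
  - apply is_derive_ext_loc with (fun y => y ^ 2).
    + apply locally_interval with m_infty (Finite 0); simpl; auto.
      intros y _ Hy. rewrite Rmin_left; lra.
    + rewrite Rmin_left by lra. apply is_derive_Reals. replace (2*x) with (INR 2 * x ^ (2-1)) by (simpl; ring). apply derivable_pt_lim_pow.
  - apply is_derive_ext_loc with (fun y => 0).
    + apply locally_interval with (Finite 0) p_infty; simpl; auto.
      intros y Hy _. rewrite Rmin_right by lra. ring.
    + rewrite Rmin_right by lra. replace (2*0) with 0 by ring. apply is_derive_Reals, derivable_pt_lim_const.
  - subst x. apply is_derive_Reals. intros eps Heps. exists (mkposreal eps Heps).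
    intros h Hh Hhe. simpl in Hhe. replace (Rmin 0 0) with 0 by (unfold Rmin; destruct (Rle_dec 0 0); lra).
    assert (Hm : Rabs (Rmin (0 + h) 0) <= Rabs h).
    { unfold Rmin; destruct (Rle_dec (0+h) 0); rewrite ?Rplus_0_l; try rewrite Rabs_R0; try apply Rle_refl; apply Rabs_pos. }
    replace ((Rmin (0 + h) 0 ^ 2 - 0 ^ 2) / h - 2 * 0) with (Rmin (0+h) 0 * (Rmin (0+h) 0 / h)) by (field; auto).
    rewrite Rabs_mult, Rabs_div by auto.
    assert (Hp : 0 < Rabs h) by (apply Rabs_pos_lt; auto).
    assert (Hq : Rabs (Rmin (0 + h) 0) / Rabs h <= 1).
    { apply Rmult_le_reg_r with (Rabs h); auto. unfold Rdiv. rewrite Rmult_assoc, Rinv_l by lra. lra. }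
    assert (0 <= Rabs (Rmin (0 + h) 0) / Rabs h) by (apply Rmult_le_pos; [apply Rabs_pos| left; apply Rinv_0_lt_compat; lra]).
    pose proof (Rabs_pos (Rmin (0 + h) 0)). nra.
Qed.

Lemma mulneg a b : a <= 0 -> 0 <= b -> a * b <= 0.
Proof. intros; nra. Qed.

Lemma coop_gronwall (u v du dv : R -> R) K t0 t1 : 0 <= K -> t0 <= t1 ->
  (forall t, t0 <= t <= t1 -> is_derive u t (du t) /\ is_derive v t (dv t)) ->
  (forall t, t0 <= t <= t1 -> du t >= - K * Rabs (u t) + K * Rmin (v t) 0 /\
                               dv t >= - K * Rabs (v t) + K * Rmin (u t) 0) ->
  Rmin (u t1) 0 ^ 2 + Rmin (v t1) 0 ^ 2 <=
  (Rmin (u t0) 0 ^ 2 + Rmin (v t0) 0 ^ 2) * exp (4 * K * (t1 - t0)).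
Proof.
  intros HK H01 Hd Hi.
  apply (gronwall (fun t => Rmin (u t) 0 ^ 2 + Rmin (v t) 0 ^ 2)
                  (fun t => 2 * Rmin (u t) 0 * du t + 2 * Rmin (v t) 0 * dv t)).
  - exact H01.
  - intros t Ht. destruct (Hd t Ht) as [Hu Hv].
    apply (is_derive_plus (fun t => Rmin (u t) 0 ^ 2) (fun t => Rmin (v t) 0 ^ 2)).
    + evar_last. apply (is_derive_comp (fun y => Rmin y 0 ^ 2) u). apply is_derive_sqmin. exact Hu.
      simpl. unfold scal; simpl; unfold mult; simpl. ring.
    + evar_last. apply (is_derive_comp (fun y => Rmin y 0 ^ 2) v). apply is_derive_sqmin. exact Hv.
      simpl. unfold scal; simpl; unfold mult; simpl. ring.
  - intros t Ht. destruct (Hi t Ht) as [Hu Hv].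
    set (U := u t) in *. set (V := v t) in *.
    unfold Rmin in *.
    destruct (Rle_dec U 0); destruct (Rle_dec V 0).
    + rewrite Rabs_left1 in Hu, Hv by lra.
      assert (U * (du t - (K*U + K*V)) <= 0) by (apply mulneg; lra).
      assert (V * (dv t - (K*V + K*U)) <= 0) by (apply mulneg; lra).
      assert (0 <= K * ((U - V) * (U - V))) by (apply Rmult_le_pos; [lra| pose proof (Rle_0_sqr (U-V)) as HH; unfold Rsqr in HH; lra]). nra.
    + rewrite Rabs_left1 in Hu by lra.
      assert (U * (du t - (K*U)) <= 0) by (apply mulneg; lra). nra.
    + rewrite Rabs_left1 in Hv by lra.
      assert (V * (dv t - (K*V)) <= 0) by (apply mulneg; lra). nra.
    + nra.
Qed.

Lemma is_derive_shift (a : R -> R) x h l : is_derive a (x + h) l -> is_derive (fun y => a (y + h)) x l.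
Proof.
  intros H. evar_last. apply (is_derive_comp a (fun y => y + h)). exact H.
  apply (is_derive_plus (fun y => y) (fun _ => h)). apply is_derive_id. apply is_derive_const.
  simpl. unfold scal, plus, zero, one; simpl; unfold mult; simpl. ring.
Qed.

Lemma dq_bound X h l e : 0 < h -> Rabs (X / h - l) < e -> (l - e) * h < X < (l + e) * h.
Proof.
  intros Hh Ha. apply Rabs_def2 in Ha. destruct Ha as [H1 H2].
  assert (X = (X / h) * h) by (field; lra). split; nra.
Qed.

Lemma quad_core (a s fa fs : R -> R) K t0 t : 0 <= K -> t0 <= t ->
  (forall tau, t0 <= tau -> is_derive a tau (fa tau) /\ is_derive s tau (fs tau)) ->
  (forall t1 t2, t0 <= t1 -> t0 <= t2 ->
     fa t2 - fa t1 >= - K * Rabs (a t2 - a t1) + K * Rmin (s t2 - s t1) 0 /\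
     fs t2 - fs t1 >= - K * Rabs (s t2 - s t1) + K * Rmin (a t2 - a t1) 0) ->
  0 <= fa t0 -> 0 <= fs t0 -> fa t < 0 -> False.
Proof.
  intros HK Ht Hd Hc Ha0 Hs0 Hm.
  set (X := exp (4 * K * (t - t0))).
  assert (HX : 1 <= X).
  { unfold X. rewrite <- exp_0. destruct (Req_dec (4 * K * (t - t0)) 0) as [E|E].
    rewrite E; lra. left; apply exp_increasing. nra. }
  assert (Hg : forall h, 0 < h ->
    Rmin (a (t + h) - a t) 0 ^ 2 + Rmin (s (t + h) - s t) 0 ^ 2 <=
    (Rmin (a (t0 + h) - a t0) 0 ^ 2 + Rmin (s (t0 + h) - s t0) 0 ^ 2) * X).
  { intros h Hh.
    apply (coop_gronwall (fun y => a (y + h) - a y) (fun y => s (y + h) - s y)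
             (fun y => fa (y + h) - fa y) (fun y => fs (y + h) - fs y) K t0 t HK Ht).
    - intros y Hy. destruct (Hd y (proj1 Hy)) as [H1 H2].
      destruct (Hd (y + h) ltac:(lra)) as [H3 H4]. split.
      + apply (is_derive_minus (fun y => a (y + h)) a). apply is_derive_shift; auto. auto.
      + apply (is_derive_minus (fun y => s (y + h)) s). apply is_derive_shift; auto. auto.
    - intros y Hy. apply (Hc y (y + h)); lra. }
  set (m := fa t) in *.
  set (r := Rmin 1 (/ (4 * X))).
  assert (Hr0 : 0 < r) by (unfold r, Rmin; destruct (Rle_dec 1 (/ (4 * X))); [lra| apply Rinv_0_lt_compat; lra]).
  assert (Hr1 : r <= 1) by (unfold r; apply Rmin_l).
  assert (Hr2 : r <= / (4 * X)) by (unfold r; apply Rmin_r).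
  assert (Hr3 : r * (4 * X) <= 1).
  { apply Rle_trans with (/ (4 * X) * (4 * X)). apply Rmult_le_compat_r; lra.
    rewrite Rinv_l; lra. }
  set (e := (- m / 2) * r).
  assert (He : 0 < e) by (unfold e; apply Rmult_lt_0_compat; lra).
  destruct (proj1 (is_derive_Reals _ _ _) (proj1 (Hd t0 (Rle_refl _))) e He) as [d1 Hd1].
  destruct (proj1 (is_derive_Reals _ _ _) (proj2 (Hd t0 (Rle_refl _))) e He) as [d2 Hd2].
  destruct (proj1 (is_derive_Reals _ _ _) (proj1 (Hd t Ht)) e He) as [d3 Hd3].
  set (h := Rmin (Rmin d1 d2) d3 / 2).
  assert (Hh0 : 0 < h).
  { unfold h. destruct d1, d2, d3; simpl. unfold Rmin.
    repeat destruct Rle_dec; lra. }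
  assert (Hhd : h < d1 /\ h < d2 /\ h < d3).
  { unfold h. destruct d1, d2, d3; simpl. unfold Rmin. repeat destruct Rle_dec; lra. }
  assert (Habs : Rabs h = h) by (apply Rabs_right; lra).
  assert (Hhn : h <> 0) by lra.
  pose proof (dq_bound _ _ _ _ Hh0 (Hd1 h Hhn ltac:(lra))) as B1.
  pose proof (dq_bound _ _ _ _ Hh0 (Hd2 h Hhn ltac:(lra))) as B2.
  pose proof (dq_bound _ _ _ _ Hh0 (Hd3 h Hhn ltac:(lra))) as B3.
  specialize (Hg h Hh0).
  assert (U0 : Rmin (a (t0 + h) - a t0) 0 ^ 2 <= (e * h) ^ 2).
  { unfold Rmin; destruct Rle_dec.
    - assert (-(e*h) <= a (t0 + h) - a t0) by nra. nra.
    - assert (0 <= e * h) by nra. nra. }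
  assert (V0 : Rmin (s (t0 + h) - s t0) 0 ^ 2 <= (e * h) ^ 2).
  { unfold Rmin; destruct Rle_dec.
    - assert (-(e*h) <= s (t0 + h) - s t0) by nra. nra.
    - assert (0 <= e * h) by nra. nra. }
  assert (Hem : e <= - m / 2) by (unfold e; nra).
  assert (U1 : a (t + h) - a t < (m / 2) * h) by (fold m in B3; nra).
  assert (U2 : (m / 2 * h) ^ 2 < Rmin (a (t + h) - a t) 0 ^ 2).
  { rewrite Rmin_left by nra. assert (m/2*h < 0) by nra. nra. }
  assert (V2 : 0 <= Rmin (s (t + h) - s t) 0 ^ 2) by (apply pow2_ge_0).
  assert (R1 : (Rmin (a (t0 + h) - a t0) 0 ^ 2 + Rmin (s (t0 + h) - s t0) 0 ^ 2) * X <= 2 * (e * h) ^ 2 * X) by nra.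
  assert (R2 : 2 * e ^ 2 * X <= m ^ 2 / 8).
  { unfold e. replace (2 * (- m / 2 * r) ^ 2 * X) with (m ^ 2 / 2 * (r * (r * X))) by field.
    assert (r * (r * X) <= 1/4).
    { assert (r * X <= 1/4) by nra. nra. }
    assert (0 <= m^2) by (apply pow2_ge_0). nra. }
  assert (0 < h ^ 2) by nra.
  assert (2 * (e * h) ^ 2 * X <= m ^ 2 / 8 * h^2).
  { replace (2 * (e * h) ^ 2 * X) with ((2 * e ^ 2 * X) * h^2) by ring. nra. }
  assert (0 < m ^ 2) by nra.
  replace ((m / 2 * h) ^ 2) with (m^2/4 * h^2) in U2 by field.
  nra.
Qed.

Lemma quad_pos (a s fa fs : R -> R) K t0 t : 0 <= K -> t0 <= t ->
  (forall tau, t0 <= tau -> is_derive a tau (fa tau) /\ is_derive s tau (fs tau)) ->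
  (forall t1 t2, t0 <= t1 -> t0 <= t2 ->
     fa t2 - fa t1 >= - K * Rabs (a t2 - a t1) + K * Rmin (s t2 - s t1) 0 /\
     fs t2 - fs t1 >= - K * Rabs (s t2 - s t1) + K * Rmin (a t2 - a t1) 0) ->
  0 <= fa t0 -> 0 <= fs t0 -> 0 <= fa t /\ 0 <= fs t.
Proof.
  intros HK Ht Hd Hc H1 H2. split.
  - destruct (Rle_or_lt 0 (fa t)) as [H|H]; auto.
    exfalso; exact (quad_core a s fa fs K t0 t HK Ht Hd Hc H1 H2 H).
  - destruct (Rle_or_lt 0 (fs t)) as [H|H]; auto.
    exfalso; apply (quad_core s a fs fa K t0 t HK Ht); auto.
    + intros tau Htau; destruct (Hd tau Htau); split; auto.
    + intros t1 t2 Ht1 Ht2; destruct (Hc t1 t2 Ht1 Ht2); split; auto.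
Qed.

Lemma quad_neg (a s fa fs : R -> R) K t0 t : 0 <= K -> t0 <= t ->
  (forall tau, t0 <= tau -> is_derive a tau (fa tau) /\ is_derive s tau (fs tau)) ->
  (forall t1 t2, t0 <= t1 -> t0 <= t2 ->
     fa t2 - fa t1 >= - K * Rabs (a t2 - a t1) + K * Rmin (s t2 - s t1) 0 /\
     fs t2 - fs t1 >= - K * Rabs (s t2 - s t1) + K * Rmin (a t2 - a t1) 0) ->
  fa t0 <= 0 -> fs t0 <= 0 -> fa t <= 0 /\ fs t <= 0.
Proof.
  intros HK Ht Hd Hc H1 H2.
  destruct (quad_pos (fun y => - a y) (fun y => - s y) (fun y => - fa y) (fun y => - fs y) K t0 t HK Ht)
    as [R1 R2].
  - intros tau Htau; destruct (Hd tau Htau) as [D1 D2]; split.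
    + apply (is_derive_opp a). exact D1.
    + apply (is_derive_opp s). exact D2.
  - intros t1 t2 Ht1 Ht2. destruct (Hc t2 t1 Ht2 Ht1) as [C1 C2].
    replace (- a t2 - - a t1) with (a t1 - a t2) by ring.
    replace (- s t2 - - s t1) with (s t1 - s t2) by ring.
    split; lra.
  - lra.
  - lra.
  - lra.
Qed.

Lemma conv_up (a fa : R -> R) T M : (forall t, T <= t -> is_derive a t (fa t)) ->
  (forall t, T <= t -> Rabs (a t) <= M) -> (forall t, T <= t -> 0 <= fa t) ->
  exists A : R, is_lim a p_infty (Finite A) /\ Rabs A <= M.
Proof.
  intros Hd Hb Hp.
  assert (Hmono : forall x y, T <= x -> x <= y -> a x <= a y).
  { intros x y Hx Hxy. apply (mvt_le a fa x y Hxy).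
    - intros t Ht; apply Hd; lra.
    - intros t Ht; apply Hp; lra. }
  set (E := fun x => exists t, T <= t /\ x = a t).
  destruct (completeness E) as [A [HA1 HA2]].
  - exists M. intros x [t [Ht ->]]. pose proof (Hb t Ht). unfold Rabs in *;
    destruct (Rcase_abs (a t)); lra.
  - exists (a T). exists T. split; auto; lra.
  - exists A. split.
    + apply is_lim_spec. intros eps. simpl.
      assert (Hex : exists t1, T <= t1 /\ A - eps < a t1).
      { apply NNPP. intros Hn.
        assert (is_upper_bound E (A - eps)).
        { intros x [t [Ht ->]]. destruct (Rle_or_lt (a t) (A - eps)); auto.
          exfalso; apply Hn; exists t; auto. }
        specialize (HA2 _ H). destruct eps; simpl in *; lra. }
      destruct Hex as [t1 [Ht1 Hlt]]. exists t1. intros x Hx.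
      assert (a t1 <= a x) by (apply Hmono; lra).
      assert (a x <= A) by (apply HA1; exists x; split; auto; lra).
      rewrite Rabs_left1 by lra. lra.
    + assert (A <= M).
      { apply HA2. intros x [t [Ht ->]]. pose proof (Hb t Ht). unfold Rabs in *; destruct (Rcase_abs (a t)); lra. }
      assert (a T <= A) by (apply HA1; exists T; split; auto; lra).
      pose proof (Hb T (Rle_refl _)) as HbT. assert (-M <= a T) by (pose proof (Rle_abs (-(a T))) as HH; rewrite Rabs_Ropp in HH; lra). apply Rabs_le; split; lra.
Qed.

Lemma conv (a fa : R -> R) T M : (forall t, T <= t -> is_derive a t (fa t)) ->
  (forall t, T <= t -> Rabs (a t) <= M) ->
  ((forall t, T <= t -> 0 <= fa t) \/ (forall t, T <= t -> fa t <= 0)) ->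
  exists A : R, is_lim a p_infty (Finite A) /\ Rabs A <= M.
Proof.
  intros Hd Hb [Hp|Hn].
  - eapply conv_up; eauto.
  - destruct (conv_up (fun y => - a y) (fun y => - fa y) T M) as [A [HA HAM]].
    + intros t Ht. apply (is_derive_opp a). auto.
    + intros t Ht. rewrite Rabs_Ropp. auto.
    + intros t Ht. specialize (Hn t Ht). lra.
    + exists (- A). split.
      * apply is_lim_ext with (fun y => - (- a y)). intros; ring.
        apply (is_lim_opp (fun y => - a y) p_infty A). exact HA.
      * rewrite Rabs_Ropp; auto.
Qed.

Lemma ball_R (x y e : R) : ball x e y <-> Rabs (y - x) < e.
Proof. split; intros H; exact H. Qed.

Lemma lin_deriv k x : is_derive (fun y => k * y) x k.
Proof.
  apply is_derive_Reals.
  assert (H := derivable_pt_lim_scal id k x 1 (derivable_pt_lim_id x)). rewrite Rmult_1_r in H. exact H.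
Qed.

Lemma const_sign (f : R -> R) T : (forall t, T <= t -> continuity_pt f t) ->
  (forall t, T <= t -> f t <> 0) ->
  (forall t, T <= t -> 0 <= f t) \/ (forall t, T <= t -> f t <= 0).
Proof.
  intros Hc Hn.
  destruct (Rlt_or_le 0 (f T)) as [HT|HT].
  - left. intros t Ht. destruct (Rle_or_lt 0 (f t)) as [H|H]; auto. exfalso.
    assert (T < t) by (destruct (Req_dec T t); [subst; lra| lra]).
    destruct (IVT_interv (fun y => - f y) T t) as [z [Hz Hfz]].
    + intros y Hy. apply continuity_pt_opp. apply Hc; lra.
    + auto.
    + lra.
    + lra.
    + apply (Hn z); lra.
  - assert (HT' : f T < 0) by (pose proof (Hn T (Rle_refl _)); lra).
    right. intros t Ht. destruct (Rle_or_lt (f t) 0) as [H|H]; auto. exfalso.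
    assert (T < t) by (destruct (Req_dec T t); [subst; lra| lra]).
    destruct (IVT_interv f T t) as [z [Hz Hfz]].
    + intros y Hy. apply Hc; lra.
    + auto.
    + lra.
    + lra.
    + apply (Hn z); lra.
Qed.

Lemma lim_deriv_zero (a fa : R -> R) T M c : (forall t, T <= t -> is_derive a t (fa t)) ->
  (forall t, T <= t -> Rabs (a t) <= M) ->
  (exists N, forall t, N < t -> Rabs (fa t - c) < Rabs c / 2) -> c = 0.
Proof.
  intros Hd Hb [N HN].
  destruct (Req_dec c 0) as [|Hc]; auto. exfalso.
  set (N1 := Rmax N T + 1).
  assert (HN1 : N < N1 /\ T < N1) by (unfold N1; pose proof (Rmax_l N T); pose proof (Rmax_r N T); lra).
  assert (HM : 0 <= M) by (pose proof (Hb T (Rle_refl _)); pose proof (Rabs_pos (a T)); lra).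
  assert (Hca : 0 < Rabs c) by (apply Rabs_pos_lt; auto).
  set (D := 4 * M / Rabs c + 1).
  assert (HD : 0 < D) by (unfold D; assert (0 <= 4 * M / Rabs c) by (apply Rmult_le_pos; [lra| left; apply Rinv_0_lt_compat; lra]); lra).
  assert (HDc : 2 * M < Rabs c / 2 * D).
  { unfold D. replace (Rabs c / 2 * (4 * M / Rabs c + 1)) with (2 * M + Rabs c / 2) by (field; lra). lra. }
  pose proof (Hb N1 ltac:(lra)) as B1. pose proof (Hb (N1 + D) ltac:(lra)) as B2.
  replace (a N1) with (a N1 - 0) in B1 by ring. replace (a (N1 + D)) with (a (N1 + D) - 0) in B2 by ring.
  apply Rabs_le_between' in B1. apply Rabs_le_between' in B2.
  destruct (Rlt_or_le 0 c) as [Hpos|Hneg].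
  - rewrite Rabs_right in HN, Hca, HDc by lra.
    assert (Hmv : (fun y => a y - c / 2 * y) N1 <= (fun y => a y - c / 2 * y) (N1 + D)).
    { apply (mvt_le (fun y => a y - c / 2 * y) (fun y => fa y - c / 2)). lra.
      - intros t Ht. apply (is_derive_minus a (fun y => c / 2 * y)). apply Hd; lra. apply lin_deriv.
      - intros t Ht. specialize (HN t ltac:(lra)). apply Rabs_def2 in HN. lra. }
    simpl in Hmv. lra.
  - assert (c < 0) by lra. rewrite Rabs_left in HN, Hca, HDc by lra.
    assert (Hmv : (fun y => c / 2 * y - a y) N1 <= (fun y => c / 2 * y - a y) (N1 + D)).
    { apply (mvt_le (fun y => c / 2 * y - a y) (fun y => c / 2 - fa y)). lra.
      - intros t Ht. apply (is_derive_minus (fun y => c / 2 * y) a). apply lin_deriv. apply Hd; lra.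
      - intros t Ht. specialize (HN t ltac:(lra)). apply Rabs_def2 in HN. lra. }
    simpl in Hmv. lra.
Qed.

Lemma cont_H (a s : R -> R) (H : R -> R -> R) K M t :
  0 <= K -> 1 < t ->
  (forall tau, 1 <= tau -> Rabs (a tau) <= M /\ Rabs (s tau) <= M) ->
  (forall x1 x2 y1 y2, Rabs x1 <= M -> Rabs x2 <= M -> Rabs y1 <= M -> Rabs y2 <= M ->
     Rabs (H x2 y2 - H x1 y1) <= K * (Rabs (x2 - x1) + Rabs (y2 - y1))) ->
  continuity_pt a t -> continuity_pt s t ->
  continuity_pt (fun tau => H (a tau) (s tau)) t.
Proof.
  intros HK Ht Hb HL Ca Cs.
  apply continuity_pt_filterlim in Ca. apply continuity_pt_filterlim in Cs.
  apply continuity_pt_filterlim. apply filterlim_locally. intros eps.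
  assert (He : 0 < eps / (2 * K + 2)) by (apply Rdiv_lt_0_compat; [apply cond_pos| lra]).
  pose proof (proj1 (filterlim_locally a (a t)) Ca (mkposreal _ He)) as A1.
  pose proof (proj1 (filterlim_locally s (s t)) Cs (mkposreal _ He)) as A2.
  assert (Hd : 0 < t - 1) by lra.
  pose proof (locally_ball t (mkposreal _ Hd)) as A3.
  eapply filter_imp; [| exact (filter_and _ _ (filter_and _ _ A1 A2) A3)].
  intros x [[B1 B2] B3]. simpl in *.
  assert (B1' : Rabs (a x - a t) < eps / (2*K+2)) by exact B1.
  assert (B2' : Rabs (s x - s t) < eps / (2*K+2)) by exact B2.
  assert (B3' : Rabs (x - t) < t - 1) by exact B3.
  change (Rabs (H (a x) (s x) - H (a t) (s t)) < eps).
  assert (H1x : 1 <= x) by (apply Rabs_def2 in B3'; lra).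
  destruct (Hb x H1x), (Hb t ltac:(lra)).
  eapply Rle_lt_trans. apply HL; auto.
  assert (K * (Rabs (a x - a t) + Rabs (s x - s t)) <= K * (2 * (eps / (2 * K + 2)))).
  { apply Rmult_le_compat_l; lra. }
  assert (K * (2 * (eps / (2 * K + 2))) < eps).
  { replace (K * (2 * (eps / (2 * K + 2)))) with (eps * (2 * K / (2 * K + 2))) by (field; lra).
    pose proof (cond_pos eps).
    assert (2 * K / (2 * K + 2) < 1).
    { apply Rmult_lt_reg_r with (2 * K + 2). lra. unfold Rdiv. rewrite Rmult_assoc, Rinv_l; lra. }
    nra. }
  lra.
Qed.

Lemma planar_coop (a s : R -> R) (F G : R -> R -> R) K M :
  0 <= K ->
  (forall t, 1 <= t -> is_derive a t (F (a t) (s t)) /\ is_derive s t (G (a t) (s t))) ->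
  (forall t, 1 <= t -> Rabs (a t) <= M /\ Rabs (s t) <= M) ->
  (forall a1 a2 s1 s2, Rabs a1 <= M -> Rabs a2 <= M -> Rabs s1 <= M -> Rabs s2 <= M ->
     F a2 s2 - F a1 s1 >= - K * Rabs (a2 - a1) + K * Rmin (s2 - s1) 0 /\
     G a2 s2 - G a1 s1 >= - K * Rabs (s2 - s1) + K * Rmin (a2 - a1) 0) ->
  exists A S : R, F A S = 0 /\ G A S = 0 /\
    is_lim a p_infty (Finite A) /\ is_lim s p_infty (Finite S).
Proof.
  intros HK Hd Hb Hc.
  set (fa := fun t => F (a t) (s t)). set (fs := fun t => G (a t) (s t)).
  assert (Hmin : forall x, - Rabs x <= Rmin x 0).
  { intros x. unfold Rmin; destruct Rle_dec; [rewrite Rabs_left1 by lra; lra| pose proof (Rabs_pos x); lra]. }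
  assert (LF : forall x1 x2 y1 y2, Rabs x1 <= M -> Rabs x2 <= M -> Rabs y1 <= M -> Rabs y2 <= M ->
     Rabs (F x2 y2 - F x1 y1) <= K * (Rabs (x2 - x1) + Rabs (y2 - y1))).
  { intros x1 x2 y1 y2 H1 H2 H3 H4.
    destruct (Hc x1 x2 y1 y2 H1 H2 H3 H4) as [C1 _].
    destruct (Hc x2 x1 y2 y1 H2 H1 H4 H3) as [C2 _].
    pose proof (Hmin (y2 - y1)). pose proof (Hmin (y1 - y2)).
    rewrite Rabs_minus_sym in H0. rewrite (Rabs_minus_sym x1 x2) in C2.
    apply Rabs_le. split; nra. }
  assert (LG : forall x1 x2 y1 y2, Rabs x1 <= M -> Rabs x2 <= M -> Rabs y1 <= M -> Rabs y2 <= M ->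
     Rabs (G x2 y2 - G x1 y1) <= K * (Rabs (x2 - x1) + Rabs (y2 - y1))).
  { intros x1 x2 y1 y2 H1 H2 H3 H4.
    destruct (Hc x1 x2 y1 y2 H1 H2 H3 H4) as [_ C1].
    destruct (Hc x2 x1 y2 y1 H2 H1 H4 H3) as [_ C2].
    pose proof (Hmin (x2 - x1)). pose proof (Hmin (x1 - x2)).
    rewrite Rabs_minus_sym in H0. rewrite (Rabs_minus_sym y1 y2) in C2.
    apply Rabs_le. split; nra. }
  assert (Hd' : forall t0, 1 <= t0 -> forall tau, t0 <= tau -> is_derive a tau (fa tau) /\ is_derive s tau (fs tau)).
  { intros t0 H0 tau Htau. apply Hd; lra. }
  assert (Hc' : forall t0, 1 <= t0 -> forall t1 t2, t0 <= t1 -> t0 <= t2 ->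
     fa t2 - fa t1 >= - K * Rabs (a t2 - a t1) + K * Rmin (s t2 - s t1) 0 /\
     fs t2 - fs t1 >= - K * Rabs (s t2 - s t1) + K * Rmin (a t2 - a t1) 0).
  { intros t0 H0 t1 t2 H1 H2. destruct (Hb t1 ltac:(lra)), (Hb t2 ltac:(lra)). apply Hc; auto. }
  assert (Hsig : exists T, 1 <= T /\
     ((forall t, T <= t -> 0 <= fa t) \/ (forall t, T <= t -> fa t <= 0)) /\
     ((forall t, T <= t -> 0 <= fs t) \/ (forall t, T <= t -> fs t <= 0))).
  { destruct (classic (exists t0, 1 <= t0 /\ 0 <= fa t0 /\ 0 <= fs t0)) as [[t0 [H0 [H1 H2]]]|NP].
    { exists t0. split; auto. split; left; intros t Ht;
      destruct (quad_pos a s fa fs K t0 t HK Ht (Hd' t0 H0) (Hc' t0 H0) H1 H2); auto. }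
    destruct (classic (exists t0, 1 <= t0 /\ fa t0 <= 0 /\ fs t0 <= 0)) as [[t0 [H0 [H1 H2]]]|NQ].
    { exists t0. split; auto. split; right; intros t Ht;
      destruct (quad_neg a s fa fs K t0 t HK Ht (Hd' t0 H0) (Hc' t0 H0) H1 H2); auto. }
    assert (Nz : forall t, 1 <= t -> fa t <> 0 /\ fs t <> 0).
    { intros t Ht. split; intros E.
      - destruct (Rle_or_lt 0 (fs t)).
        + apply NP; exists t; repeat split; auto; lra.
        + apply NQ; exists t; repeat split; auto; lra.
      - destruct (Rle_or_lt 0 (fa t)).
        + apply NP; exists t; repeat split; auto; lra.
        + apply NQ; exists t; repeat split; auto; lra. }
    exists 2. split; [lra|]. split.
    - apply const_sign.
      + intros t Ht. apply (cont_H a s F K M t HK ltac:(lra) Hb LF).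
        * apply derive_cont with (fa t). apply Hd; lra.
        * apply derive_cont with (fs t). apply Hd; lra.
      + intros t Ht; apply Nz; lra.
    - apply const_sign.
      + intros t Ht. apply (cont_H a s G K M t HK ltac:(lra) Hb LG).
        * apply derive_cont with (fa t). apply Hd; lra.
        * apply derive_cont with (fs t). apply Hd; lra.
      + intros t Ht; apply Nz; lra. }
  destruct Hsig as [T [HT [Sa Ss]]].
  destruct (conv a fa T M) as [A [HA HAM]].
  { intros t Ht; apply Hd; lra. } { intros t Ht; apply Hb; lra. } { exact Sa. }
  destruct (conv s fs T M) as [S [HS HSM]].
  { intros t Ht; apply Hd; lra. } { intros t Ht; apply Hb; lra. } { exact Ss. }
  assert (Hnear : forall eps, 0 < eps -> exists N, forall t, N < t -> Rabs (a t - A) < eps /\ Rabs (s t - S) < eps).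
  { intros eps He.
    destruct (proj2 (is_lim_spec _ _ _) HA (mkposreal eps He)) as [N1 HN1].
    destruct (proj2 (is_lim_spec _ _ _) HS (mkposreal eps He)) as [N2 HN2].
    exists (Rmax N1 N2). intros t Ht. split.
    - apply HN1. pose proof (Rmax_l N1 N2); lra.
    - apply HN2. pose proof (Rmax_r N1 N2); lra. }
  assert (Hclose : forall (H : R -> R -> R),
     (forall x1 x2 y1 y2, Rabs x1 <= M -> Rabs x2 <= M -> Rabs y1 <= M -> Rabs y2 <= M ->
       Rabs (H x2 y2 - H x1 y1) <= K * (Rabs (x2 - x1) + Rabs (y2 - y1))) ->
     H A S <> 0 ->
     exists N, forall t, N < t -> Rabs (H (a t) (s t) - H A S) < Rabs (H A S) / 2).
  { intros H HL Hc0.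
    set (c := H A S) in *.
    assert (Hca : 0 < Rabs c) by (apply Rabs_pos_lt; auto).
    assert (He : 0 < Rabs c / (4 * K + 4)) by (apply Rdiv_lt_0_compat; lra).
    destruct (Hnear _ He) as [N HN].
    exists (Rmax N 1). intros t Ht.
    assert (N < t /\ 1 < t) by (pose proof (Rmax_l N 1); pose proof (Rmax_r N 1); lra).
    destruct (HN t ltac:(lra)) as [N1 N2].
    destruct (Hb t ltac:(lra)).
    eapply Rle_lt_trans. apply HL; auto.
    assert (K * (Rabs (a t - A) + Rabs (s t - S)) <= K * (2 * (Rabs c / (4 * K + 4)))).
    { apply Rmult_le_compat_l; lra. }
    assert (K * (2 * (Rabs c / (4 * K + 4))) < Rabs c / 2).
    { replace (K * (2 * (Rabs c / (4 * K + 4)))) with (Rabs c / 2 * (4 * K / (4 * K + 4))) by (field; lra).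
      assert (4 * K / (4 * K + 4) < 1).
      { apply Rmult_lt_reg_r with (4 * K + 4). lra. unfold Rdiv. rewrite Rmult_assoc, Rinv_l; lra. }
      nra. }
    lra. }
  exists A, S. split; [|split; [|split; auto]].
  - destruct (Req_dec (F A S) 0) as [|Hc0]; auto.
    apply (lim_deriv_zero a fa T M).
    + intros t Ht; apply Hd; lra.
    + intros t Ht; apply Hb; lra.
    + apply (Hclose F LF Hc0).
  - destruct (Req_dec (G A S) 0) as [|Hc0]; auto.
    apply (lim_deriv_zero s fs T M).
    + intros t Ht; apply Hd; lra.
    + intros t Ht; apply Hb; lra.
    + apply (Hclose G LG Hc0).
Qed.

Definition h4 (x : R) := Rabs x ^ 3 * x.

Lemma h4_mono x y : x <= y -> h4 x <= h4 y.
Proof.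
  unfold h4; intros H.
  destruct (Rle_or_lt 0 x); destruct (Rle_or_lt 0 y).
  - rewrite !Rabs_right by lra. assert (x*x <= y*y) by nra. nra.
  - lra.
  - rewrite (Rabs_left x), (Rabs_right y) by lra. nra.
  - rewrite !Rabs_left by lra. assert (y*y <= x*x) by nra. nra.
Qed.

Lemma h4_lip M x y : Rabs x <= M -> Rabs y <= M -> Rabs (h4 x - h4 y) <= 4 * M^3 * Rabs (x - y).
Proof.
  unfold h4; intros Hx Hy.
  assert (HM : 0 <= M) by (pose proof (Rabs_pos x); lra).
  revert Hx Hy.
  destruct (Rle_or_lt 0 x); destruct (Rle_or_lt 0 y);
  [rewrite (Rabs_right x), (Rabs_right y) by lra
  |rewrite (Rabs_right x), (Rabs_left y) by lra
  |rewrite (Rabs_left x), (Rabs_right y) by lra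
  |rewrite (Rabs_left x), (Rabs_left y) by lra]; intros Hx Hy.
  - replace (x ^ 3 * x - y ^ 3 * y) with ((x - y) * ((x+y)*(x*x+y*y))) by ring.
    rewrite Rabs_mult. rewrite Rmult_comm. apply Rmult_le_compat_r. apply Rabs_pos.
    rewrite Rabs_right by nra. assert (x*x <= M*M) by nra. assert (y*y<=M*M) by nra. nra.
  - rewrite (Rabs_right (x - y)) by lra.
    replace (x ^ 3 * x - (- y) ^ 3 * y) with (x^4 + y^4) by ring.
    rewrite Rabs_right by nra.
    assert (x*x <= M*M) by nra. assert (y*y<=M*M) by nra.
    assert (x^3 <= M^3) by nra. assert (y*y*(-y) <= M^3) by nra. nra.
  - rewrite (Rabs_left (x - y)) by lra.
    replace ((- x) ^ 3 * x - y ^ 3 * y) with (-(x^4 + y^4)) by ring.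
    rewrite Rabs_Ropp, Rabs_right by nra.
    assert (x*x <= M*M) by nra. assert (y*y<=M*M) by nra.
    assert (y^3 <= M^3) by nra. assert (x*x*(-x) <= M^3) by nra. nra.
  - replace ((-x) ^ 3 * x - (-y) ^ 3 * y) with ((x - y) * (-(x+y)*(x*x+y*y))) by ring.
    rewrite Rabs_mult. rewrite Rmult_comm. apply Rmult_le_compat_r. apply Rabs_pos.
    rewrite Rabs_right by nra. assert (x*x <= M*M) by nra. assert (y*y<=M*M) by nra. nra.
Qed.

Lemma absle x y : Rabs x <= y -> -y <= x <= y.
Proof. unfold Rabs; destruct (Rcase_abs x); lra. Qed.

Lemma rhs_a_diff lam q sigB epsa ba L M a1 a2 s1 s2 :
  0 <= lam -> 0 < q -> 0 < sigB -> 0 < epsa -> 0 <= L ->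
  (forall x y, Rabs (ba x - ba y) <= L * Rabs (x - y)) ->
  Rabs a1 <= M -> Rabs a2 <= M -> Rabs s1 <= M -> Rabs s2 <= M ->
  rhs_a lam q sigB epsa ba a2 s2 - rhs_a lam q sigB epsa ba a1 s1 >=
  - (lam + 8 * sigB * (epsa + 1) * M ^ 3 + q * L) * Rabs (a2 - a1)
  + (lam + 8 * sigB * (epsa + 1) * M ^ 3 + q * L) * Rmin (s2 - s1) 0.
Proof.
  intros Hl Hq Hs He HL Hb H1 H2 H3 H4.
  assert (HM : 0 <= M) by (pose proof (Rabs_pos a1); lra).
  assert (HM3 : 0 <= M^3) by (apply pow_le; lra).
  unfold rhs_a.
  change (Rabs s2 ^ 3 * s2) with (h4 s2). change (Rabs s1 ^ 3 * s1) with (h4 s1).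
  change (Rabs a2 ^ 3 * a2) with (h4 a2). change (Rabs a1 ^ 3 * a1) with (h4 a1).
  pose proof (absle _ _ (h4_lip M a2 a1 H2 H1)) as Ha.
  pose proof (absle _ _ (h4_lip M s2 s1 H4 H3)) as Hs'.
  pose proof (absle _ _ (Hb a2 a1)) as Hbb.
  pose proof (Rabs_pos (a2 - a1)) as Hpa.
  pose proof (Rle_abs (a2 - a1)) as Hpa2.
  pose proof (Rle_abs (-(a2 - a1))) as Hpa3. rewrite Rabs_Ropp in Hpa3.
  assert (T1 : -lam * (a2 - a1) >= - lam * Rabs (a2 - a1)) by nra.
  assert (T3 : - 2 * epsa * sigB * (h4 a2 - h4 a1) >= - 2 * epsa * sigB * (4 * M^3 * Rabs (a2 - a1))).
  { assert (0 < 2 * epsa * sigB) by nra. nra. }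
  assert (T5 : q * (ba a2 - ba a1) >= - q * (L * Rabs (a2 - a1))) by nra.
  assert (T24 : lam * (s2 - s1) + epsa * sigB * (h4 s2 - h4 s1) >=
                (lam + 8 * sigB * (epsa + 1) * M ^ 3 + q * L) * Rmin (s2 - s1) 0).
  { unfold Rmin; destruct (Rle_dec (s2 - s1) 0).
    - destruct (Rle_lt_or_eq_dec _ _ r) as [r'|r'].
      + rewrite Rabs_left in Hs' by lra.
        assert (epsa * sigB * (h4 s2 - h4 s1) >= epsa * sigB * (4 * M ^ 3 * (s2 - s1))) by
          (assert (0 < epsa * sigB) by nra; nra).
        assert (0 <= sigB * M^3) by nra. assert (0 <= q * L) by nra. assert (0 <= epsa * (sigB * M^3)) by (apply Rmult_le_pos; lra).
        assert (0 <= (8 * sigB * (epsa + 1) * M ^ 3 + q * L - 4 * epsa * sigB * M^3)) by nra.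
        nra.
      + assert (s2 = s1) by lra. subst. lra.
    - assert (h4 s1 <= h4 s2) by (apply h4_mono; lra).
      assert (0 <= epsa * sigB) by nra. nra. }
  assert (0 <= sigB * M^3 * Rabs (a2 - a1)) by (apply Rmult_le_pos; nra).
  nra.
Qed.

Lemma rhs_s_diff lam q sigB epsa bs L M a1 a2 s1 s2 :
  0 <= lam -> 0 < q -> 0 < sigB -> 0 < epsa -> 0 <= L ->
  (forall x y, Rabs (bs x - bs y) <= L * Rabs (x - y)) ->
  Rabs a1 <= M -> Rabs a2 <= M -> Rabs s1 <= M -> Rabs s2 <= M ->
  rhs_s lam q sigB epsa bs a2 s2 - rhs_s lam q sigB epsa bs a1 s1 >=
  - (lam + 8 * sigB * (epsa + 1) * M ^ 3 + q * L) * Rabs (s2 - s1)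
  + (lam + 8 * sigB * (epsa + 1) * M ^ 3 + q * L) * Rmin (a2 - a1) 0.
Proof.
  intros Hl Hq Hs He HL Hb H1 H2 H3 H4.
  assert (HM : 0 <= M) by (pose proof (Rabs_pos a1); lra).
  assert (HM3 : 0 <= M^3) by (apply pow_le; lra).
  unfold rhs_s.
  change (Rabs s2 ^ 3 * s2) with (h4 s2). change (Rabs s1 ^ 3 * s1) with (h4 s1).
  change (Rabs a2 ^ 3 * a2) with (h4 a2). change (Rabs a1 ^ 3 * a1) with (h4 a1).
  pose proof (absle _ _ (h4_lip M a2 a1 H2 H1)) as Ha.
  pose proof (absle _ _ (h4_lip M s2 s1 H4 H3)) as Hs'.
  pose proof (absle _ _ (Hb s2 s1)) as Hbb.
  pose proof (Rabs_pos (s2 - s1)) as Hpa.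
  pose proof (Rle_abs (s2 - s1)) as Hpa2.
  pose proof (Rle_abs (-(s2 - s1))) as Hpa3. rewrite Rabs_Ropp in Hpa3.
  assert (T1 : -lam * (s2 - s1) >= - lam * Rabs (s2 - s1)) by nra.
  assert (T3 : - sigB * (h4 s2 - h4 s1) >= - sigB * (4 * M^3 * Rabs (s2 - s1))) by nra.
  assert (T5 : q * (bs s2 - bs s1) >= - q * (L * Rabs (s2 - s1))) by nra.
  assert (T24 : lam * (a2 - a1) + epsa * sigB * (h4 a2 - h4 a1) >=
                (lam + 8 * sigB * (epsa + 1) * M ^ 3 + q * L) * Rmin (a2 - a1) 0).
  { unfold Rmin; destruct (Rle_dec (a2 - a1) 0).
    - destruct (Rle_lt_or_eq_dec _ _ r) as [r'|r'].
      + rewrite Rabs_left in Ha by lra.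
        assert (epsa * sigB * (h4 a2 - h4 a1) >= epsa * sigB * (4 * M ^ 3 * (a2 - a1))) by
          (assert (0 < epsa * sigB) by nra; nra).
        assert (0 <= sigB * M^3) by nra. assert (0 <= q * L) by nra. assert (0 <= epsa * (sigB * M^3)) by (apply Rmult_le_pos; lra).
        assert (0 <= (8 * sigB * (epsa + 1) * M ^ 3 + q * L - 4 * epsa * sigB * M^3)) by nra.
        nra.
      + assert (a2 = a1) by lra. subst. lra.
    - assert (h4 a1 <= h4 a2) by (apply h4_mono; lra).
      assert (0 <= epsa * sigB) by nra. nra. }
  assert (0 <= sigB * M^3 * Rabs (s2 - s1)) by (apply Rmult_le_pos; nra).
  assert (0 <= epsa * sigB * M^3 * Rabs (s2 - s1)) by (apply Rmult_le_pos; [|apply Rabs_pos]; apply Rmult_le_pos; [nra|lra]).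
  nra.
Qed.

Lemma quart_bound B k x : 0 < k -> B * x - k * (x ^ 3 * x) <= k + B ^ 2 / (8 * k).
Proof.
  intros Hk.
  assert (H1 : k * (x ^ 3 * x) >= k * (2 * x^2 - 1)).
  { assert (x ^ 3 * x - (2 * x ^ 2 - 1) = (x^2 - 1)^2) by ring.
    assert (0 <= (x^2-1)^2) by apply pow2_ge_0. nra. }
  assert (H2 : 2 * k * x ^ 2 - B * x + B ^ 2 / (8 * k) = 2 * k * (x - B / (4 * k)) ^ 2) by (field; lra).
  assert (0 <= 2 * k * (x - B / (4 * k)) ^ 2) by (apply Rmult_le_pos; [lra| apply pow2_ge_0]).
  lra.
Qed.

Lemma energy lam q sigB epsa ba bs L ga gs a s :
  0 <= lam -> 0 < q -> 0 < sigB -> 0 < epsa < 2 -> 0 <= L -> 0 < ga -> 0 < gs ->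
  (forall x y, Rabs (ba x - ba y) <= L * Rabs (x - y)) ->
  (forall x y, Rabs (bs x - bs y) <= L * Rabs (x - y)) ->
  0 <= a -> 0 <= s ->
  let c0 := (epsa + 2) / (4 * epsa) in
  let k := sigB * (2 - epsa) / 4 in
  let B := lam * Rabs (1 - c0) + q * c0 * L + q * L + c0 * ga + gs in
  c0 * rhs_a lam q sigB epsa ba a s + rhs_s lam q sigB epsa bs a s <=
  (2 * (k + B ^ 2 / (8 * k)) + q * c0 * ba 0 + q * bs 0) - (c0 * ga * a + gs * s).
Proof.
  intros Hl Hq Hs [He1 He2] HL Hga Hgs Hba Hbs Ha Hs0 c0 k B.
  assert (Hc0 : 0 < c0) by (unfold c0; apply Rdiv_lt_0_compat; lra).
  assert (Hk : 0 < k) by (unfold k; apply Rdiv_lt_0_compat; [apply Rmult_lt_0_compat|]; lra).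
  unfold rhs_a, rhs_s. rewrite (Rabs_right a), (Rabs_right s) by lra.
  assert (Eq : c0 * (- lam * (a - s) + epsa * sigB * (s ^ 3 * s) - 2 * epsa * sigB * (a ^ 3 * a) + q * ba a) +
    (- lam * (s - a) - sigB * (s ^ 3 * s) + epsa * sigB * (a ^ 3 * a) + q * bs s) =
    lam * (1 - c0) * (a - s) - k * (s ^ 3 * s) - 2 * k * (a ^ 3 * a) + (q * c0) * ba a + q * bs s).
  { unfold c0, k. field. lra. }
  rewrite Eq.
  assert (F1 : ba a <= ba 0 + L * a).
  { pose proof (Hba a 0) as H. rewrite Rminus_0_r in H.
    rewrite (Rabs_right a) in H by lra. pose proof (Rle_abs (ba a - ba 0)). lra. }
  assert (F2 : bs s <= bs 0 + L * s).
  { pose proof (Hbs s 0) as H. rewrite Rminus_0_r in H.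
    rewrite (Rabs_right s) in H by lra. pose proof (Rle_abs (bs s - bs 0)). lra. }
  assert (F1' : (q * c0) * ba a <= (q * c0) * (ba 0 + L * a)) by (apply Rmult_le_compat_l; [nra| lra]).
  assert (F2' : q * bs s <= q * (bs 0 + L * s)) by (apply Rmult_le_compat_l; lra).
  assert (F3 := quart_bound B k a Hk).
  assert (F4 := quart_bound B k s Hk).
  assert (F5 : lam * (1 - c0) * (a - s) <= lam * Rabs (1 - c0) * a + lam * Rabs (1 - c0) * s).
  { pose proof (Rle_abs (1 - c0)). pose proof (Rle_abs (-(1 - c0))). rewrite Rabs_Ropp in *.
    destruct (Rle_or_lt s a).
    - assert (lam * (1 - c0) <= lam * Rabs (1 - c0)) by (apply Rmult_le_compat_l; lra).
      assert (0 <= lam * Rabs (1 - c0)) by (apply Rmult_le_pos; [lra| apply Rabs_pos]). nra.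
    - assert (lam * (-(1 - c0)) <= lam * Rabs (1 - c0)) by (apply Rmult_le_compat_l; lra).
      assert (0 <= lam * Rabs (1 - c0)) by (apply Rmult_le_pos; [lra| apply Rabs_pos]). nra. }
  assert (F6 : 0 <= k * (a ^ 3 * a)) by (apply Rmult_le_pos; [lra| apply Rmult_le_pos; [apply pow_le|]; lra]).
  assert (EB1 : B * a = lam * Rabs (1 - c0) * a + (q * c0) * (L * a) + q * (L * a) + c0 * ga * a + gs * a) by (unfold B; ring).
  assert (EB2 : B * s = lam * Rabs (1 - c0) * s + (q * c0) * (L * s) + q * (L * s) + c0 * ga * s + gs * s) by (unfold B; ring).
  assert (E1' : (q * c0) * (ba 0 + L * a) = (q * c0) * ba 0 + (q * c0) * (L * a)) by ring.
  assert (E2' : q * (bs 0 + L * s) = q * bs 0 + q * (L * s)) by ring.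
  assert (0 <= gs * a) by nra. assert (0 <= q * (L * a)) by (apply Rmult_le_pos; nra).
  assert (0 <= c0 * ga * s) by (apply Rmult_le_pos; nra). assert (0 <= q * c0 * (L * s)) by (apply Rmult_le_pos; nra).
  assert (0 <= k * (s ^ 3 * s)) by (apply Rmult_le_pos; [lra| apply Rmult_le_pos; [apply pow_le|]; lra]).
  lra.
Qed.

Lemma right_near (f : R -> R) l : filterlim f (at_right 0) (locally l) ->
  forall e, 0 < e -> exists d, 0 < d /\ forall t, 0 < t < d -> Rabs (f t - l) < e.
Proof.
  intros H e He. destruct (proj1 (filterlim_locally f l) H (mkposreal e He)) as [d Hd].
  exists d. split. apply cond_pos. intros t [H1 H2].
  assert (Hb : ball 0 d t).
  { change (Rabs (t - 0) < d). rewrite Rminus_0_r, Rabs_right; lra. }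
  exact (Hd t Hb H1).
Qed.

Lemma local_bound (f : R -> R) l T : 0 < T -> filterlim f (at_right 0) (locally l) ->
  (forall t, 0 < t -> continuity_pt f t) ->
  exists M, 0 <= M /\ forall t, 0 < t <= T -> Rabs (f t) <= M.
Proof.
  intros HT Hl Hc.
  destruct (right_near f l Hl 1 Rlt_0_1) as [d [Hd Hn]].
  set (dl := Rmin (d / 2) T).
  assert (Hdl : 0 < dl /\ dl <= T /\ dl < d).
  { unfold dl, Rmin; destruct Rle_dec; lra. }
  destruct (continuity_ab_maj f dl T ltac:(lra)) as [Mx [HMx _]].
  { intros c Hc'. apply Hc. lra. }
  destruct (continuity_ab_min f dl T ltac:(lra)) as [mx [Hmx _]].
  { intros c Hc'. apply Hc. lra. }
  exists (Rmax (Rabs l + 1) (Rmax (Rabs (f Mx)) (Rabs (f mx)))).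
  split.
  { apply Rle_trans with (Rabs l + 1). pose proof (Rabs_pos l); lra. apply Rmax_l. }
  intros t Ht.
  destruct (Rlt_or_le t dl).
  - specialize (Hn t ltac:(lra)).
    apply Rle_trans with (Rabs l + 1); [|apply Rmax_l].
    pose proof (Rabs_triang (f t - l) l). replace (f t - l + l) with (f t) in H0 by ring. lra.
  - specialize (HMx t ltac:(lra)). specialize (Hmx t ltac:(lra)).
    eapply Rle_trans; [|apply Rmax_r].
    pose proof (Rle_abs (f Mx)). pose proof (Rle_abs (- f mx)). rewrite Rabs_Ropp in H1.
    pose proof (Rmax_l (Rabs (f Mx)) (Rabs (f mx))). pose proof (Rmax_r (Rabs (f Mx)) (Rabs (f mx))).
    apply Rabs_le. split; lra.
Qed.

Lemma is_derive_lin (f g : R -> R) x lf lg k1 k2 k3 :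
  is_derive f x lf -> is_derive g x lg ->
  is_derive (fun y => k1 * f y + k2 * g y + k3) x (k1 * lf + k2 * lg).
Proof.
  intros Hf Hg. apply is_derive_Reals. apply is_derive_Reals in Hf. apply is_derive_Reals in Hg.
  replace (k1 * lf + k2 * lg) with (k1 * lf + k2 * lg + 0) by ring.
  apply (derivable_pt_lim_plus (plus_fct (mult_real_fct k1 f) (mult_real_fct k2 g)) (fct_cte k3)).
  apply derivable_pt_lim_plus; apply derivable_pt_lim_scal; auto.
  apply derivable_pt_lim_const.
Qed.

Lemma div_step X Y g1 g2 C da m : 0 < g1 -> 0 < g2 -> 0 <= C -> 0 <= da -> m <= 0 ->
  X - Y >= - C * da + C * m ->
  X / g1 - Y / g1 >= - (C / g1 + C / g2) * da + (C / g1 + C / g2) * m.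
Proof.
  intros H1 H2 HC Hda Hm H.
  assert (E1 : X / g1 - Y / g1 = (X - Y) * / g1) by (field; lra).
  assert (Hi : 0 < / g1) by (apply Rinv_0_lt_compat; lra).
  assert (E2 : (X - Y) * / g1 >= (- C * da + C * m) * / g1) by (apply Rmult_ge_compat_r; lra).
  assert (E3 : (- C * da + C * m) * / g1 = - (C / g1) * da + (C / g1) * m) by (field; lra).
  assert (0 <= C / g2) by (apply Rdiv_le_0_compat; lra).
  assert (0 <= C / g2 * da) by (apply Rmult_le_pos; lra).
  assert (C / g2 * m <= 0) by (rewrite Rmult_comm; apply mulneg; lra).
  assert (E4 : - (C / g1 + C / g2) * da + (C / g1 + C / g2) * m = - (C / g1) * da + (C / g1) * m - C / g2 * da + C / g2 * m) by ring.
  lra.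
Qed.

Lemma sqmin_small x l e : 0 <= l -> Rabs (x - l) < e -> Rmin x 0 ^ 2 <= e ^ 2.
Proof.
  intros Hl H. apply Rabs_def2 in H. unfold Rmin; destruct Rle_dec.
  - assert (-e <= x) by lra. nra.
  - assert (0 < e) by lra. nra.
Qed.

Lemma exp_le x y : x <= y -> exp x <= exp y.
Proof. intros H. destruct (Rle_lt_or_eq_dec _ _ H) as [H'|H']. left; apply exp_increasing; auto. subst; lra. Qed.

Lemma Rmin_nonpos x : Rmin x 0 <= 0.
Proof. apply Rmin_r. Qed.

Theorem proposition2p2
  (ga gs lam q sigB epsa : R) (beta_a beta_s : R -> R) (Ta0 Ts0 : R)
  (Ta Ts : R -> R) :
  0 < ga -> 0 < gs -> 0 <= lam -> 0 < q -> 0 < sigB ->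
  0 < epsa < 2 ->
  globally_lipschitz beta_a -> globally_lipschitz beta_s ->
  (forall x : R, 0 <= beta_a x) -> (forall x : R, 0 < beta_s x) ->
  0 <= Ta0 -> 0 <= Ts0 ->
  is_solution ga gs lam q sigB epsa beta_a beta_s Ta0 Ts0 Ta Ts ->
  exists a s : R,
    is_equilibrium lam q sigB epsa beta_a beta_s a s /\
    is_lim Ta p_infty (Finite a) /\ is_lim Ts p_infty (Finite s).
Proof.
  intros Hga Hgs Hlam Hq HsB [He1 He2] [La [HLa Hba]] [Ls [HLs Hbs]] Hbap Hbsp HTa0 HTs0
         [H0a [H0s [Hla [Hls Hder]]]].
  set (L := La + Ls).
  assert (HL : 0 <= L) by (unfold L; lra).
  assert (Hba' : forall x y, Rabs (beta_a x - beta_a y) <= L * Rabs (x - y)).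
  { intros x y. pose proof (Hba x y). pose proof (Rabs_pos (x - y)). unfold L. nra. }
  assert (Hbs' : forall x y, Rabs (beta_s x - beta_s y) <= L * Rabs (x - y)).
  { intros x y. pose proof (Hbs x y). pose proof (Rabs_pos (x - y)). unfold L. nra. }
  set (Fa := fun x y => rhs_a lam q sigB epsa beta_a x y / ga).
  set (Gs := fun x y => rhs_s lam q sigB epsa beta_s x y / gs).
  set (Cof := fun M => lam + 8 * sigB * (epsa + 1) * M ^ 3 + q * L).
  set (Kof := fun M => Cof M / ga + Cof M / gs).
  assert (HC0 : forall M, 0 <= M -> 0 <= Cof M).
  { intros M HM. unfold Cof. assert (0 <= M ^ 3) by (apply pow_le; lra).
    assert (0 <= sigB * (epsa + 1) * M ^ 3) by (apply Rmult_le_pos; [nra| lra]).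
    assert (0 <= q * L) by nra. lra. }
  assert (HK0 : forall M, 0 <= M -> 0 <= Kof M).
  { intros M HM. unfold Kof. pose proof (HC0 M HM).
    assert (0 <= Cof M / ga) by (apply Rdiv_le_0_compat; lra).
    assert (0 <= Cof M / gs) by (apply Rdiv_le_0_compat; lra). lra. }
  assert (FD : forall M a1 a2 s1 s2, 0 <= M -> Rabs a1 <= M -> Rabs a2 <= M -> Rabs s1 <= M -> Rabs s2 <= M ->
     Fa a2 s2 - Fa a1 s1 >= - Kof M * Rabs (a2 - a1) + Kof M * Rmin (s2 - s1) 0 /\
     Gs a2 s2 - Gs a1 s1 >= - Kof M * Rabs (s2 - s1) + Kof M * Rmin (a2 - a1) 0).
  { intros M a1 a2 s1 s2 HM H1 H2 H3 H4.
    pose proof (rhs_a_diff lam q sigB epsa beta_a L M a1 a2 s1 s2 Hlam Hq HsB He1 HL Hba' H1 H2 H3 H4) as D1.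
    pose proof (rhs_s_diff lam q sigB epsa beta_s L M a1 a2 s1 s2 Hlam Hq HsB He1 HL Hbs' H1 H2 H3 H4) as D2.
    split.
    - exact (div_step _ _ ga gs (Cof M) (Rabs (a2 - a1)) (Rmin (s2 - s1) 0) Hga Hgs (HC0 M HM) (Rabs_pos _) (Rmin_nonpos _) D1).
    - unfold Kof. rewrite (Rplus_comm (Cof M / ga)).
      exact (div_step _ _ gs ga (Cof M) (Rabs (s2 - s1)) (Rmin (a2 - a1) 0) Hgs Hga (HC0 M HM) (Rabs_pos _) (Rmin_nonpos _) D2). }
  assert (LB : forall T, 0 < T -> exists M, 0 <= M /\ forall t, 0 < t <= T -> Rabs (Ta t) <= M /\ Rabs (Ts t) <= M).
  { intros T HT.
    destruct (local_bound Ta Ta0 T HT Hla) as [M1 [HM1 B1]].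
    { intros t Ht. apply (derive_cont Ta t _ (proj1 (Hder t Ht))). }
    destruct (local_bound Ts Ts0 T HT Hls) as [M2 [HM2 B2]].
    { intros t Ht. apply (derive_cont Ts t _ (proj2 (Hder t Ht))). }
    exists (Rmax M1 M2). split. apply Rle_trans with M1; [lra| apply Rmax_l].
    intros t Ht. split.
    - eapply Rle_trans; [apply B1; auto| apply Rmax_l].
    - eapply Rle_trans; [apply B2; auto| apply Rmax_r]. }
  assert (NN : forall t, 0 < t -> 0 <= Ta t /\ 0 <= Ts t).
  { intros t Ht.
    destruct (LB t Ht) as [M [HM Hb]].
    set (K := Kof M). assert (HK : 0 <= K) by (apply HK0; auto).
    set (E := fun y => Rmin (Ta y) 0 ^ 2 + Rmin (Ts y) 0 ^ 2).
    assert (Hgr : forall d, 0 < d <= t -> E t <= E d * exp (4 * K * (t - d))).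
    { intros d Hd. unfold E.
      apply (coop_gronwall Ta Ts (fun y => Fa (Ta y) (Ts y)) (fun y => Gs (Ta y) (Ts y)) K d t HK ltac:(lra)).
      - intros y Hy. apply Hder. lra.
      - intros y Hy. destruct (Hb y ltac:(lra)) as [Hay Hsy].
        set (a := Ta y) in *. set (s := Ts y) in *.
        assert (Hsp : Rabs (Rmax s 0) <= M) by (unfold Rmax; destruct Rle_dec; [rewrite Rabs_R0; lra| auto]).
        assert (Hap : Rabs (Rmax a 0) <= M) by (unfold Rmax; destruct Rle_dec; [rewrite Rabs_R0; lra| auto]).
        assert (H0M : Rabs 0 <= M) by (rewrite Rabs_R0; lra).
        destruct (FD M 0 a (Rmax s 0) s HM H0M Hay Hsp Hsy) as [D1 _].
        destruct (FD M (Rmax a 0) a 0 s HM Hap Hay H0M Hsy) as [_ D2].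
        assert (P1 : 0 <= Fa 0 (Rmax s 0)).
        { assert (Hp : 0 <= Rmax s 0) by apply Rmax_r.
          unfold Fa, rhs_a. apply Rmult_le_pos; [| left; apply Rinv_0_lt_compat; lra].
          assert (0 <= Rabs (Rmax s 0) ^ 3 * Rmax s 0) by (apply Rmult_le_pos; [apply pow_le, Rabs_pos| lra]).
          pose proof (Hbap 0). replace (Rabs 0 ^ 3 * 0) with 0 by ring.
          assert (0 <= epsa * sigB * (Rabs (Rmax s 0) ^ 3 * Rmax s 0)) by (apply Rmult_le_pos; nra).
          assert (0 <= lam * Rmax s 0) by nra. assert (0 <= q * beta_a 0) by nra. lra. }
        assert (P2 : 0 <= Gs (Rmax a 0) 0).
        { assert (Hp : 0 <= Rmax a 0) by apply Rmax_r.
          unfold Gs, rhs_s. apply Rmult_le_pos; [| left; apply Rinv_0_lt_compat; lra].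
          assert (0 <= Rabs (Rmax a 0) ^ 3 * Rmax a 0) by (apply Rmult_le_pos; [apply pow_le, Rabs_pos| lra]).
          pose proof (Hbsp 0). replace (Rabs 0 ^ 3 * 0) with 0 by ring.
          assert (0 <= epsa * sigB * (Rabs (Rmax a 0) ^ 3 * Rmax a 0)) by (apply Rmult_le_pos; nra).
          assert (0 <= lam * Rmax a 0) by nra. assert (0 <= q * beta_s 0) by nra. lra. }
        rewrite Rminus_0_r in D1, D2.
        replace (Rmin (s - Rmax s 0) 0) with (Rmin s 0) in D1 by (unfold Rmin, Rmax; repeat destruct Rle_dec; lra).
        replace (Rmin (a - Rmax a 0) 0) with (Rmin a 0) in D2 by (unfold Rmin, Rmax; repeat destruct Rle_dec; lra).
        fold K in D1, D2.
        split; lra. }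
    assert (Hsmall : forall e, 0 < e -> E t <= 2 * e ^ 2 * exp (4 * K * t)).
    { intros e He.
      destruct (right_near Ta Ta0 Hla e He) as [d1 [Hd1 Hn1]].
      destruct (right_near Ts Ts0 Hls e He) as [d2 [Hd2 Hn2]].
      set (d := Rmin t (Rmin d1 d2) / 2).
      assert (Hd : 0 < d /\ d <= t /\ d < d1 /\ d < d2) by (unfold d, Rmin; repeat destruct Rle_dec; lra).
      specialize (Hgr d ltac:(lra)).
      assert (Ed : E d <= 2 * e ^ 2).
      { unfold E. pose proof (sqmin_small _ _ _ HTa0 (Hn1 d ltac:(lra))).
        pose proof (sqmin_small _ _ _ HTs0 (Hn2 d ltac:(lra))). lra. }
      assert (Hx : exp (4 * K * (t - d)) <= exp (4 * K * t)) by (apply exp_le; nra).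
      assert (0 <= E d) by (unfold E; pose proof (pow2_ge_0 (Rmin (Ta d) 0)); pose proof (pow2_ge_0 (Rmin (Ts d) 0)); lra).
      pose proof (exp_pos (4 * K * (t - d))).
      assert (E d * exp (4 * K * (t - d)) <= 2 * e ^ 2 * exp (4 * K * (t - d))) by (apply Rmult_le_compat_r; lra).
      assert (0 <= 2 * e ^ 2) by nra.
      assert (2 * e ^ 2 * exp (4 * K * (t - d)) <= 2 * e ^ 2 * exp (4 * K * t)) by (apply Rmult_le_compat_l; lra).
      lra. }
    assert (Et0 : E t <= 0).
    { destruct (Rle_or_lt (E t) 0) as [|HE]; auto. exfalso.
      set (X := exp (4 * K * t)). assert (HX : 0 < X) by apply exp_pos.
      set (e := Rmin 1 (E t / (4 * X))).
      assert (He : 0 < e) by (unfold e, Rmin; destruct Rle_dec; [lra| apply Rdiv_lt_0_compat; lra]).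
      assert (He1' : e <= 1) by apply Rmin_l.
      assert (He2' : e * (4 * X) <= E t).
      { unfold e. apply Rle_trans with (E t / (4 * X) * (4 * X)).
        apply Rmult_le_compat_r; [lra| apply Rmin_r]. right; field; lra. }
      specialize (Hsmall e He). fold X in Hsmall.
      assert (e ^ 2 <= e) by nra.
      assert (2 * e ^ 2 * X <= 2 * e * X) by nra.
      lra. }
    unfold E in Et0.
    pose proof (pow2_ge_0 (Rmin (Ta t) 0)). pose proof (pow2_ge_0 (Rmin (Ts t) 0)).
    split.
    - destruct (Rle_or_lt 0 (Ta t)) as [|Hn]; auto. rewrite Rmin_left in Et0 by lra.
      assert (0 < Ta t ^ 2) by nra. lra.
    - destruct (Rle_or_lt 0 (Ts t)) as [|Hn]; auto. rewrite (Rmin_left (Ts t)) in Et0 by lra.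
      assert (0 < Ts t ^ 2) by nra. lra. }
  set (c0 := (epsa + 2) / (4 * epsa)).
  set (kk := sigB * (2 - epsa) / 4).
  set (BB := lam * Rabs (1 - c0) + q * c0 * L + q * L + c0 * ga + gs).
  set (Dc := 2 * (kk + BB ^ 2 / (8 * kk)) + q * c0 * beta_a 0 + q * beta_s 0).
  assert (Hen : forall a s, 0 <= a -> 0 <= s ->
    c0 * rhs_a lam q sigB epsa beta_a a s + rhs_s lam q sigB epsa beta_s a s <= Dc - (c0 * ga * a + gs * s)).
  { intros a s Ha Hs. exact (energy lam q sigB epsa beta_a beta_s L ga gs a s Hlam Hq HsB (conj He1 He2) HL Hga Hgs Hba' Hbs' Ha Hs). }
  assert (Hc0 : 0 < c0) by (unfold c0; apply Rdiv_lt_0_compat; lra).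
  set (V := fun y => c0 * ga * Ta y + gs * Ts y + - Dc).
  assert (Hgr : forall t, 1 <= t -> V t <= V 1 * exp (-1 * (t - 1))).
  { intros t Ht. apply (gronwall V (fun y => c0 * ga * Fa (Ta y) (Ts y) + gs * Gs (Ta y) (Ts y)) (-1) 1 t Ht).
    - intros y Hy. apply (is_derive_lin Ta Ts y _ _ (c0 * ga) gs (- Dc)); apply Hder; lra.
    - intros y Hy. destruct (NN y ltac:(lra)) as [Ha Hs]. pose proof (Hen (Ta y) (Ts y) Ha Hs).
      assert (c0 * ga * Fa (Ta y) (Ts y) + gs * Gs (Ta y) (Ts y) =
              c0 * rhs_a lam q sigB epsa beta_a (Ta y) (Ts y) + rhs_s lam q sigB epsa beta_s (Ta y) (Ts y))
        by (unfold Fa, Gs; field; lra).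
      unfold V. lra. }
  set (Vm := Dc + Rmax (V 1) 0).
  assert (HV : forall t, 1 <= t -> c0 * ga * Ta t + gs * Ts t <= Vm).
  { intros t Ht. specialize (Hgr t Ht).
    assert (Hx : exp (-1 * (t - 1)) <= 1) by (apply Rle_trans with (exp 0); [apply exp_le; lra| rewrite exp_0; lra]).
    pose proof (exp_pos (-1 * (t - 1))).
    assert (V 1 * exp (-1 * (t - 1)) <= Rmax (V 1) 0).
    { set (x := exp (-1 * (t - 1))) in *. set (v := V 1).
      unfold Rmax; destruct Rle_dec.
      - assert (v * x <= 0 * x) by (apply Rmult_le_compat_r; lra). lra.
      - assert (v * x <= v * 1) by (apply Rmult_le_compat_l; lra). lra. }
    assert (V t = c0 * ga * Ta t + gs * Ts t - Dc) by (unfold V; ring). unfold Vm. lra. }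
  assert (HVm : 0 <= Vm).
  { pose proof (HV 1 (Rle_refl _)). destruct (NN 1 ltac:(lra)).
    assert (0 <= c0 * ga * Ta 1) by (apply Rmult_le_pos; nra). assert (0 <= gs * Ts 1) by nra. lra. }
  set (M := Vm / (c0 * ga) + Vm / gs).
  assert (HM : 0 <= M).
  { unfold M. assert (0 <= Vm / (c0 * ga)) by (apply Rdiv_le_0_compat; nra).
    assert (0 <= Vm / gs) by (apply Rdiv_le_0_compat; nra). lra. }
  assert (UB : forall t, 1 <= t -> Rabs (Ta t) <= M /\ Rabs (Ts t) <= M).
  { intros t Ht. destruct (NN t ltac:(lra)) as [Ha Hs]. pose proof (HV t Ht).
    assert (0 <= c0 * ga * Ta t) by (apply Rmult_le_pos; nra). assert (0 <= gs * Ts t) by nra.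
    assert (0 <= Vm / (c0 * ga)) by (apply Rdiv_le_0_compat; nra).
    assert (0 <= Vm / gs) by (apply Rdiv_le_0_compat; nra).
    rewrite !Rabs_right by lra. unfold M. split.
    - assert (Ta t <= Vm / (c0 * ga)).
      { apply Rmult_le_reg_r with (c0 * ga). nra. unfold Rdiv. rewrite Rmult_assoc, Rinv_l by nra. lra. }
      lra.
    - assert (Ts t <= Vm / gs).
      { apply Rmult_le_reg_r with gs. nra. unfold Rdiv. rewrite Rmult_assoc, Rinv_l by nra. lra. }
      lra. }
  destruct (planar_coop Ta Ts Fa Gs (Kof M) M (HK0 M HM)) as [A [S [HA [HS [LA LS]]]]].
  - intros t Ht. apply Hder. lra.
  - exact UB.
  - intros a1 a2 s1 s2 H1 H2 H3 H4. apply FD; auto.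
  - exists A, S. split; [split|split; auto].
    + unfold Fa in HA. replace (rhs_a lam q sigB epsa beta_a A S) with (rhs_a lam q sigB epsa beta_a A S / ga * ga) by (field; lra).
      rewrite HA; ring.
    + unfold Gs in HS. replace (rhs_s lam q sigB epsa beta_s A S) with (rhs_s lam q sigB epsa beta_s A S / gs * gs) by (field; lra).
      rewrite HS; ring.
Qed.
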